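(* Let $\beta_1 = 0$ and let $\beta_2 \in [0,1)$. There exist a one-dimensional online convex optimization problem (a compact convex feasible set $\mathcal{F} \subset \mathbb{R}$ and a sequence of convex loss functions $f_t : \mathcal{F} \to \mathbb{R}$ with uniformly bounded gradients) and an initial point $x_1 \in \mathcal{F}$ such that, for every initial step size $\alpha > 0$, the iterates $\{x_t\}$ of \textsc{Adam} with parameters $\alpha, \beta_1, \beta_2$ satisfy $R_T/T \not\to 0$ as $T \to \infty$.
   Context: \textsc{Adam} (without debiasing) on a closed convex set $\mathcal{F} \subset \mathbb{R}^d$ with loss functions $f_1, f_2, \dots$, initial point $x_1 \in \mathcal{F}$, initial step size $\alpha > 0$ and constants $\beta_1, \beta_2 \in [0,1)$ is defined as follows. Set $m_0 = v_0 = 0 \in \mathbb{R}^d$. For $t = 1, 2, \dots$: $g_t = \nabla f_t(x_t)$; $m_t = \beta_1 m_{t-1} + (1-\beta_1) g_t$; $v_t = \beta_2 v_{t-1} + (1-\beta_2) g_t^2$ (square taken coordinatewise); $V_t = \mathrm{diag}(v_t)$; $\alpha_t = \alpha/\sqrt{t}$; $\hat{x}_{t+1} = x_t - \alpha_t V_t^{-1/2} m_t$; $x_{t+1} = \Pi_{\mathcal{F}, \sqrt{V_t}}(\hat{x}_{t+1})$, where for a positive definite matrix $M$, $\Pi_{\mathcal{F}, M}(y) = \arg\min_{x \in \mathcal{F}} \|M^{1/2}(x-y)\|$. The regret after $T$ steps is $R_T = \sum_{t=1}^T f_t(x_t) - \min_{x \in \mathcal{F}} \sum_{t=1}^T f_t(x)$.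 *)

(* Defs.v *)
(* classical reals. One-dimensional Adam (no debiasing). *)
From Stdlib Require Import Reals Lra ClassicalEpsilon.
Open Scope R_scope.

Definition in_F (a b x : R) : Prop := a <= x <= b.

Definition convex_on (a b : R) (h : R -> R) : Prop :=
  forall x y l, in_F a b x -> in_F a b y -> 0 <= l <= 1 ->
    h (l * x + (1 - l) * y) <= l * h x + (1 - l) * h y.

(* Weighted projection: p = argmin_{z in F} |M^{1/2} (z - y)| with M = sqrt(v),
   so M^{1/2} = v^{1/4} = sqrt (sqrt v). *)
Definition is_proj (a b v y p : R) : Prop :=
  in_F a b p /\
  forall z, in_F a b z ->
    Rabs (sqrt (sqrt v) * (p - y)) <= Rabs (sqrt (sqrt v) * (z - y)).

Fixpoint adam_m (beta1 : R) (g : nat -> R) (t : nat) : R :=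
  match t with
  | O => 0
  | S s => beta1 * adam_m beta1 g s + (1 - beta1) * g (S s)
  end.

Fixpoint adam_v (beta2 : R) (g : nat -> R) (t : nat) : R :=
  match t with
  | O => 0
  | S s => beta2 * adam_v beta2 g s + (1 - beta2) * (g (S s)) ^ 2
  end.

(* x : nat -> R is a run of Adam (indices t >= 1; x 0 is irrelevant)
   with gradient oracle df (df t y = f_t'(y)). *)
Definition is_adam_run (a b : R) (df : nat -> R -> R)
    (alpha beta1 beta2 x1 : R) (x : nat -> R) : Prop :=
  let g := fun t => df t (x t) in
  x 1%nat = x1 /\
  forall t : nat, (1 <= t)%nat ->
    is_proj a b (adam_v beta2 g t)
      (x t - alpha / sqrt (INR t) * (adam_m beta1 g t / sqrt (adam_v beta2 g t)))
      (x (S t)).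

Fixpoint cum_loss (f : nat -> R -> R) (y : nat -> R) (T : nat) : R :=
  match T with
  | O => 0
  | S s => cum_loss f y s + f (S s) (y (S s))
  end.

Definition is_min_on (a b : R) (h : R -> R) (mval : R) : Prop :=
  (exists u, in_F a b u /\ h u = mval) /\ forall z, in_F a b z -> mval <= h z.

(* min_{u in F} h u (chosen by classical epsilon; exists for continuous h). *)
Definition min_on (a b : R) (h : R -> R) : R :=
  epsilon (inhabits 0) (is_min_on a b h).

Definition regret (a b : R) (f : nat -> R -> R) (x : nat -> R) (T : nat) : R :=
  cum_loss f x T - min_on a b (fun u => cum_loss f (fun _ => u) T).

(* Main.v *)
Require Import Defs.
From Stdlib Require Import Reals Lra Lia ZArith ClassicalEpsilon.
Open Scope R_scope.

Lemma v_nonneg b g t : 0 <= b -> b < 1 -> 0 <= adam_v b g t.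
Proof.
  intros Hb Hb1; induction t as [|t IH]; simpl; [lra|].
  assert (0 <= g (S t) ^ 2) by (simpl; nra). nra.
Qed.

Lemma v_le b g M t : 0 <= b -> b < 1 -> (forall s, g s ^ 2 <= M) -> 0 <= M ->
  adam_v b g t <= M.
Proof.
  intros Hb Hb1 HM HM0; induction t as [|t IH]; simpl; [lra|].
  specialize (HM (S t)). nra.
Qed.

Lemma v_pos b g t : 0 <= b -> b < 1 -> (forall s, 1 <= g s ^ 2) ->
  1 - b <= adam_v b g (S t).
Proof.
  intros Hb Hb1 H1. simpl. pose proof (v_nonneg b g t Hb Hb1).
  specialize (H1 (S t)). nra.
Qed.

Lemma v_lower b g t : 0 <= b -> b < 1 -> (1 - b) * g (S t) ^ 2 <= adam_v b g (S t).
Proof.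
  intros Hb Hb1. simpl. pose proof (v_nonneg b g t Hb Hb1). nra.
Qed.

Lemma v_decay b g s r : 0 <= b -> b < 1 ->
  (forall i, (1 <= i <= r)%nat -> g (s + i)%nat = -1) ->
  adam_v b g (s + r) <= b ^ r * adam_v b g s + 1.
Proof.
  intros Hb Hb1; induction r as [|r IH]; intros Hg.
  - rewrite Nat.add_0_r. simpl. lra.
  - rewrite Nat.add_succ_r. simpl adam_v.
    rewrite <- Nat.add_succ_r. rewrite (Hg (S r)) by lia.
    assert (IH' : adam_v b g (s + r) <= b ^ r * adam_v b g s + 1).
    { apply IH. intros i Hi. apply Hg. lia. }
    simpl pow. nra.
Qed.

Lemma proj_ge a b v y p : 0 < v -> is_proj a b v y p -> Rmin b y <= p.
Proof.
  intros Hv [[Hap Hpb] Hz].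
  assert (Hw : 0 < sqrt (sqrt v)) by (apply sqrt_lt_R0, sqrt_lt_R0; lra).
  destruct (Rle_dec (Rmin b y) p) as [Hle|Hlt]; [exact Hle|].
  exfalso. apply Rnot_le_lt in Hlt.
  assert (Hzf : in_F a b (Rmin b y)).
  { split; [lra|]. apply Rmin_l. }
  specialize (Hz _ Hzf).
  rewrite !Rabs_mult, (Rabs_pos_eq (sqrt (sqrt v))) in Hz by lra.
  assert (Hmy : Rmin b y <= y) by apply Rmin_r.
  rewrite (Rabs_left (p - y)) in Hz by lra.
  rewrite (Rabs_left1 (Rmin b y - y)) in Hz by lra.
  nra.
Qed.

Lemma m_zero g t : (1 <= t)%nat -> adam_m 0 g t = g t.
Proof. intros Ht. destruct t; [lia|]. simpl. ring. Qed.

Definition cc (n t : nat) : R := if Nat.eqb (t mod n) 0 then INR n else -1.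
Definition ff (n : nat) (t : nat) (y : R) : R := y * cc n t.
Definition dff (n : nat) (t : nat) (y : R) : R := cc n t.

Lemma cc_sq n t : (1 <= n)%nat -> 1 <= cc n t ^ 2 <= INR n ^ 2.
Proof.
  intros Hn. assert (1 <= INR n) by (apply (le_INR 1); lia).
  unfold cc; destruct (Nat.eqb _ _); simpl; nra.
Qed.

Lemma cc_top n t : (t mod n = 0)%nat -> cc n t = INR n.
Proof. intros H. unfold cc. rewrite H. reflexivity. Qed.

Lemma cc_up n q i : (1 <= i < n)%nat -> cc n (q * n + i) = -1.
Proof.
  intros Hi. unfold cc.
  replace (q * n + i)%nat with (i + q * n)%nat by lia.
  rewrite Nat.Div0.mod_add, Nat.mod_small by lia.
  destruct i; [lia|]. reflexivity.
Qed.

Lemma x_in n alpha b2 x : is_adam_run 0 1 (dff n) alpha 0 b2 1 x ->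
  forall t, (1 <= t)%nat -> 0 <= x t <= 1.
Proof.
  intros [H1 Hs] t Ht. induction t as [|t IH]; [lia|].
  destruct (Nat.eq_dec t 0) as [->|Hne]; [rewrite H1; lra|].
  destruct (Hs t ltac:(lia)) as [HF _]. exact HF.
Qed.

Lemma x_step n alpha b2 x : (1 <= n)%nat -> 0 <= b2 < 1 ->
  is_adam_run 0 1 (dff n) alpha 0 b2 1 x ->
  forall t, (1 <= t)%nat ->
  Rmin 1 (x t - alpha / sqrt (INR t) * (cc n t / sqrt (adam_v b2 (cc n) t))) <= x (S t).
Proof.
  intros Hn Hb [H1 Hs] t Ht.
  specialize (Hs t Ht). cbv zeta in Hs.
  change (fun t0 : nat => dff n t0 (x t0)) with (cc n) in Hs.
  rewrite m_zero in Hs by exact Ht.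
  eapply proj_ge; [|exact Hs].
  destruct t; [lia|].
  pose proof (v_pos b2 (cc n) t (proj1 Hb) (proj2 Hb) (fun s => proj1 (cc_sq n s Hn))).
  lra.
Qed.

Lemma pow_dec b k j : 0 <= b <= 1 -> (k <= j)%nat -> b ^ j <= b ^ k.
Proof.
  intros Hb Hkj. induction Hkj; [lra|].
  simpl. assert (0 <= b ^ m) by (apply pow_le; lra). nra.
Qed.

Lemma div_mono al A B : 0 < al -> 0 < A -> A <= B -> al / B <= al / A.
Proof.
  intros Ha HA HAB. unfold Rdiv. apply Rmult_le_compat_l; [lra|].
  apply Rinv_le_contravar; lra.
Qed.

Lemma first_block n alpha b2 x : (1 <= n)%nat -> 0 <= b2 < 1 -> 0 < alpha ->
  is_adam_run 0 1 (dff n) alpha 0 b2 1 x ->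
  forall t, (1 <= t <= n)%nat -> x t = 1.
Proof.
  intros Hn Hb Ha Hr t Ht. induction t as [|t IH]; [lia|].
  destruct (Nat.eq_dec t 0) as [->|Hne]; [apply (proj1 Hr)|].
  pose proof (x_step n alpha b2 x Hn Hb Hr t ltac:(lia)) as Hs.
  pose proof (x_in n alpha b2 x Hr (S t) ltac:(lia)) as Hin.
  rewrite IH in Hs by lia.
  replace t with (0 * n + t)%nat in Hs at 2 by lia.
  rewrite cc_up in Hs by lia.
  assert (0 < sqrt (INR t)) by (apply sqrt_lt_R0, (lt_INR 0); lia).
  assert (0 < sqrt (adam_v b2 (cc n) t)).
  { apply sqrt_lt_R0. destruct t; [lia|].
    pose proof (v_pos b2 (cc n) t (proj1 Hb) (proj2 Hb) (fun s => proj1 (cc_sq n s Hn))). lra. }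
  assert (0 < alpha / sqrt (INR t) * (1 / sqrt (adam_v b2 (cc n) t))).
  { apply Rmult_lt_0_compat; apply Rdiv_lt_0_compat; lra. }
  replace (1 - alpha / sqrt (INR t) * (-1 / sqrt (adam_v b2 (cc n) t))) with
     (1 + alpha / sqrt (INR t) * (1 / sqrt (adam_v b2 (cc n) t))) in Hs by (field; lra).
  unfold Rmin in Hs. destruct (Rle_dec _ _); lra.
Qed.

Lemma block n K alpha b2 x : (1 <= K)%nat -> (K < n)%nat -> 0 <= b2 < 1 -> 0 < alpha ->
  b2 ^ K * INR n ^ 2 <= 1 -> 2 / sqrt (1 - b2) <= INR (n - K) ->
  is_adam_run 0 1 (dff n) alpha 0 b2 1 x ->
  forall q, x ((q + 1) * n)%nat = 1 -> x ((q + 2) * n)%nat = 1.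
Proof.
  intros HK1 HKn Hb Ha Hdec Hm Hr q Hx.
  assert (Hn : (1 <= n)%nat) by lia.
  set (t := ((q + 1) * n)%nat) in *.
  set (V := adam_v b2 (cc n)).
  assert (Hnt : (n <= t)%nat) by (unfold t; nia).
  assert (HtR : 0 < INR t) by (apply (lt_INR 0); lia).
  assert (Hst : 0 < sqrt (INR t)) by (apply sqrt_lt_R0; lra).
  set (p := 1 - b2).
  assert (Hp : 0 < p) by (unfold p; lra).
  assert (Hsp : 0 < sqrt p) by (apply sqrt_lt_R0; lra).
  set (d := alpha / (sqrt (INR t) * sqrt p)).
  set (e := alpha / (2 * sqrt (INR t))).
  assert (HnR : 1 <= INR n) by (apply (le_INR 1); lia).
  assert (Hdown : 1 - d <= x (S t)).
  { pose proof (x_step n alpha b2 x Hn Hb Hr t ltac:(lia)) as Hs.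
    rewrite Hx in Hs. rewrite cc_top in Hs by (unfold t; apply Nat.Div0.mod_mul).
    assert (HV : p * INR n ^ 2 <= V t).
    { unfold V.
      pose proof (v_lower b2 (cc n) (t - 1) (proj1 Hb) (proj2 Hb)) as Hl.
      replace (S (t - 1)) with t in Hl by lia.
      rewrite cc_top in Hl by (unfold t; apply Nat.Div0.mod_mul).
      exact Hl. }
    assert (Hsq : sqrt p * INR n <= sqrt (V t)).
    { rewrite <- (sqrt_square (INR n)) by lra. rewrite <- sqrt_mult by nra.
      apply sqrt_le_1_alt. simpl in HV. nra. }
    assert (Hb1 : alpha / sqrt (INR t) * (INR n / sqrt (V t)) <= d).
    { unfold d. assert (0 < sqrt (V t)) by nra.
      replace (alpha / sqrt (INR t) * (INR n / sqrt (V t))) with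
        (alpha / (sqrt (INR t) * (sqrt (V t) / INR n))) by (field; lra).
      apply div_mono; [lra| nra |].
      apply Rmult_le_compat_l; [lra|].
      apply (Rmult_le_reg_r (INR n)); [lra|]. unfold Rdiv. rewrite Rmult_assoc, Rinv_l; lra. }
    fold V in Hs.
    unfold Rmin in Hs. destruct (Rle_dec _ _).
    - assert (0 <= alpha / sqrt (INR t) * (INR n / sqrt (V t))).
      { assert (0 < sqrt (V t)) by nra.
        apply Rmult_le_pos; apply Rlt_le, Rdiv_lt_0_compat; lra. }
      lra.
    - lra. }
  assert (Hups : forall i, (i <= n - 1)%nat ->
            Rmin 1 (1 - d + e * INR (i + 1 - K)) <= x (t + i + 1)%nat).
  { induction i as [|i IH]; intros Hi.
    - replace (0 + 1 - K)%nat with 0%nat by lia. rewrite Nat.add_0_r, Nat.add_1_r.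
      simpl INR. unfold Rmin; destruct (Rle_dec _ _); lra.
    - set (s := (t + S i)%nat).
      assert (Hs1 : (1 <= s)%nat) by (unfold s; lia).
      pose proof (x_step n alpha b2 x Hn Hb Hr s Hs1) as Hs.
      assert (Hcs : cc n s = -1) by (unfold s, t; apply cc_up; lia).
      rewrite Hcs in Hs.
      fold V in Hs.
      assert (HsR : 0 < INR s) by (apply (lt_INR 0); lia).
      assert (Hss : 0 < sqrt (INR s)) by (apply sqrt_lt_R0; lra).
      assert (HVs : 1 - b2 <= V s).
      { unfold V, s. rewrite Nat.add_succ_r.
        apply v_pos; [lra|lra|exact (fun s => proj1 (cc_sq n s Hn))]. }
      assert (HsV : 0 < sqrt (V s)) by (apply sqrt_lt_R0; lra).
      set (U := alpha / (sqrt (INR s) * sqrt (V s))).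
      assert (HU0 : 0 <= U) by (unfold U; apply Rlt_le, Rdiv_lt_0_compat; nra).
      replace (x s - alpha / sqrt (INR s) * (-1 / sqrt (V s))) with (x s + U) in Hs
        by (unfold U; field; lra).
      assert (IH' := IH ltac:(lia)).
      replace (t + i + 1)%nat with s in IH' by (unfold s; lia).
      replace (t + S i + 1)%nat with (S s) by (unfold s; lia).
      destruct (Compare_dec.le_lt_dec K (S i)) as [HKi|HKi].
      + assert (HUe : e <= U).
        { assert (HVs2 : V s <= 2).
          { unfold V, s.
            pose proof (v_decay b2 (cc n) t (S i) (proj1 Hb) (proj2 Hb)) as Hd.
            assert (Hvt : V t <= INR n ^ 2).
            { apply v_le; [lra|lra| |nra]. intro s0. apply (cc_sq n s0 Hn). }
            assert (Hpw : b2 ^ S i <= b2 ^ K) by (apply pow_dec; lra || lia).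
            assert (0 <= b2 ^ S i) by (apply pow_le; lra).
            assert (0 <= V t) by (apply v_nonneg; lra).
            fold V in Hd. fold V. 
            assert (V (t + S i)%nat <= b2 ^ S i * V t + 1).
            { apply Hd. intros j Hj. unfold t. apply cc_up. lia. }
            nra. }
          assert (HsT : INR s <= 2 * INR t).
          { replace 2 with (INR 2) by (simpl; lra). rewrite <- mult_INR.
            apply le_INR. unfold s. lia. }
          unfold U, e. apply div_mono; [lra| nra |].
          rewrite <- sqrt_mult by lra.
          replace (2 * sqrt (INR t)) with (sqrt (4 * INR t)).
          2:{ rewrite sqrt_mult by lra. replace 4 with (2 * 2) by lra.
              rewrite sqrt_square by lra. reflexivity. }
          apply sqrt_le_1_alt. nra. }
        replace (S i + 1 - K)%nat with (S (i + 1 - K)) by lia.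
        rewrite S_INR, Rmult_plus_distr_l, Rmult_1_r.
        replace (s + 1)%nat with (S s) by lia. unfold Rmin in *. repeat destruct (Rle_dec _ _); lra.
      + replace (S i + 1 - K)%nat with 0%nat by lia.
        replace (i + 1 - K)%nat with 0%nat in IH' by lia.
        replace (s + 1)%nat with (S s) by lia. unfold Rmin in *. repeat destruct (Rle_dec _ _); lra. }
  specialize (Hups (n - 1)%nat ltac:(lia)).
  replace (t + (n - 1) + 1)%nat with ((q + 2) * n)%nat in Hups by (unfold t; nia).
  replace (n - 1 + 1 - K)%nat with (n - K)%nat in Hups by lia.
  assert (Hed : d <= e * INR (n - K)).
  { unfold d, e.
    apply Rle_trans with (alpha / (2 * sqrt (INR t)) * (2 / sqrt p)).
    - right. field. lra.
    - apply Rmult_le_compat_l; [apply Rlt_le, Rdiv_lt_0_compat; lra|]. exact Hm. }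
  pose proof (x_in n alpha b2 x Hr ((q + 2) * n)%nat ltac:(nia)).
  unfold Rmin in Hups. destruct (Rle_dec _ _); lra.
Qed.

Lemma nat_above r : exists k : nat, r <= INR k.
Proof.
  destruct (archimed r) as [H _].
  exists (Z.to_nat (up r)).
  destruct (Z_le_gt_dec 0 (up r)) as [Hz|Hz].
  - rewrite INR_IZR_INZ, Z2Nat.id by lia. lra.
  - replace (Z.to_nat (up r)) with 0%nat by lia. apply Z.gt_lt in Hz. apply IZR_lt in Hz. simpl. lra.
Qed.

Lemma bernoulli h j : 0 <= h -> 1 + INR j * h <= (1 + h) ^ j.
Proof.
  intros Hh. induction j as [|j IH]; [simpl; lra|].
  rewrite S_INR. cbn [pow]. assert (0 <= INR j) by apply pos_INR. nra.
Qed.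

Lemma constants b2 : 0 <= b2 < 1 -> exists n K : nat,
  (1 <= K)%nat /\ (K < n)%nat /\ b2 ^ K * INR n ^ 2 <= 1 /\
  2 / sqrt (1 - b2) <= INR (n - K).
Proof.
  intros Hb.
  destruct (nat_above (2 / sqrt (1 - b2))) as [m0 Hm0].
  set (m := S m0).
  assert (Hm : 2 / sqrt (1 - b2) <= INR m) by (unfold m; rewrite S_INR; lra).
  set (h := (1 - b2) / (1 + b2)).
  assert (Hh : 0 < h) by (unfold h; apply Rdiv_lt_0_compat; lra).
  destruct (nat_above ((3 + INR m) ^ 2 / h ^ 3)) as [j0 Hj0].
  set (j := S j0).
  assert (Hj : (3 + INR m) ^ 2 / h ^ 3 <= INR j) by (unfold j; rewrite S_INR; lra).
  assert (Hj1 : 1 <= INR j) by (unfold j; rewrite S_INR; pose proof (pos_INR j0); lra).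
  exists (3 * j + m)%nat, (3 * j)%nat.
  split; [unfold j; lia|]. split; [unfold m; lia|]. split.
  2:{ replace (3 * j + m - 3 * j)%nat with m by lia. exact Hm. }
  set (q0 := (1 + b2) / 2).
  assert (Hq : q0 * (1 + h) = 1) by (unfold q0, h; field; lra).
  assert (Hbq : b2 ^ (3 * j) <= q0 ^ (3 * j)).
  { apply pow_incr. unfold q0; lra. }
  assert (Hpow : q0 ^ (3 * j) * (1 + h) ^ (3 * j) = 1).
  { rewrite <- Rpow_mult_distr, Hq. apply pow1. }
  assert (Hber : INR j * h <= (1 + h) ^ j) by (pose proof (bernoulli h j ltac:(lra)); lra).
  assert (Hcube : (INR j * h) ^ 3 <= (1 + h) ^ (3 * j)).
  { rewrite Nat.mul_comm, pow_mult. apply pow_incr. split; [nra|exact Hber]. }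
  assert (HmR : 0 <= INR m) by apply pos_INR.
  assert (Hh3 : 0 < h ^ 3) by (apply pow_lt; lra).
  assert (Hkey : (3 + INR m) ^ 2 <= INR j * h ^ 3).
  { apply (Rmult_le_compat_r (h ^ 3)) in Hj; [|lra].
    unfold Rdiv in Hj. rewrite Rmult_assoc, Rinv_l in Hj by lra. lra. }
  rewrite plus_INR, mult_INR. replace (INR 3) with 3 by (simpl; lra).
  assert (Hn2 : (3 * INR j + INR m) ^ 2 <= (INR j * h) ^ 3).
  { assert (3 * INR j + INR m <= (3 + INR m) * INR j) by nra.
    assert ((3 * INR j + INR m) ^ 2 <= ((3 + INR m) * INR j) ^ 2).
    { apply pow_incr. split; [nra|lra]. }
    assert (((3 + INR m) * INR j) ^ 2 <= (INR j * h) ^ 3).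
    { rewrite Rpow_mult_distr. replace ((INR j * h) ^ 3) with (INR j ^ 2 * (INR j * h ^ 3)) by ring.
      rewrite Rmult_comm. apply Rmult_le_compat_l; [nra|exact Hkey]. }
    lra. }
  assert (0 <= b2 ^ (3 * j)) by (apply pow_le; lra).
  assert (0 <= q0 ^ (3 * j)) by (apply pow_le; unfold q0; lra).
  set (X := (3 * INR j + INR m) ^ 2) in *.
  assert (0 <= X) by (unfold X; apply pow_le; nra).
  apply Rle_trans with (q0 ^ (3 * j) * X); [apply Rmult_le_compat_r; lra|].
  rewrite <- Hpow. apply Rmult_le_compat_l; lra.
Qed.

Lemma all_tops n K alpha b2 x : (1 <= K)%nat -> (K < n)%nat -> 0 <= b2 < 1 -> 0 < alpha ->
  b2 ^ K * INR n ^ 2 <= 1 -> 2 / sqrt (1 - b2) <= INR (n - K) ->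
  is_adam_run 0 1 (dff n) alpha 0 b2 1 x ->
  forall q, x ((q + 1) * n)%nat = 1.
Proof.
  intros HK1 HKn Hb Ha Hdec Hm Hr q. induction q as [|q IH].
  - apply (first_block n alpha b2 x); try lia; auto.
  - replace (S q + 1)%nat with (q + 2)%nat by lia.
    eapply block; eauto.
Qed.

Lemma cum_lin n T u : cum_loss (ff n) (fun _ => u) T = u * cum_loss (ff n) (fun _ => 1) T.
Proof.
  induction T as [|T IH]; simpl; [ring|]. rewrite IH. unfold ff. ring.
Qed.

Lemma min_le n T : min_on 0 1 (fun u => cum_loss (ff n) (fun _ => u) T) <= 0.
Proof.
  set (h := fun u => cum_loss (ff n) (fun _ => u) T).
  set (S0 := cum_loss (ff n) (fun _ => 1) T).
  assert (Hh : forall u, h u = u * S0) by (intro u; apply cum_lin).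
  assert (Hex : exists mv, is_min_on 0 1 h mv).
  { destruct (Rle_dec 0 S0) as [HS|HS].
    - exists 0. split.
      + exists 0. split; [unfold in_F; lra|]. rewrite Hh. ring.
      + intros z [Hz1 Hz2]. rewrite Hh. nra.
    - exists S0. split.
      + exists 1. split; [unfold in_F; lra|]. rewrite Hh. ring.
      + intros z [Hz1 Hz2]. rewrite Hh. nra. }
  pose proof (epsilon_spec (inhabits 0) (is_min_on 0 1 h) Hex) as [_ Hmin].
  unfold min_on. fold h.
  specialize (Hmin 0 ltac:(unfold in_F; lra)).
  rewrite Hh in Hmin. lra.
Qed.

Lemma cum_bound n (x : nat -> R) : (1 <= n)%nat ->
  (forall t, (1 <= t)%nat -> 0 <= x t <= 1) ->
  (forall q, x ((q + 1) * n)%nat = 1) ->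
  forall Q, INR Q <= cum_loss (ff n) x (Q * n).
Proof.
  intros Hn Hin Htop.
  assert (HnR : 1 <= INR n) by (apply (le_INR 1); lia).
  assert (Hge : forall t, (1 <= t)%nat -> -1 <= ff n t (x t)).
  { intros t Ht. specialize (Hin t Ht). unfold ff, cc.
    destruct (Nat.eqb _ _); nra. }
  induction Q as [|Q IH]; [simpl; lra|].
  assert (Hin2 : forall r, (r <= n - 1)%nat -> INR Q - INR r <= cum_loss (ff n) x (Q * n + r)).
  { induction r as [|r IHr]; intros Hr.
    - rewrite Nat.add_0_r. simpl. lra.
    - rewrite Nat.add_succ_r. simpl cum_loss. rewrite S_INR.
      specialize (IHr ltac:(lia)). specialize (Hge (S (Q * n + r)) ltac:(lia)). lra. }
  specialize (Hin2 (n - 1)%nat ltac:(lia)).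
  replace (S Q * n)%nat with (S (Q * n + (n - 1))) by lia.
  simpl cum_loss.
  replace (S (Q * n + (n - 1))) with ((Q + 1) * n)%nat by lia.
  rewrite Htop. unfold ff. rewrite cc_top by apply Nat.Div0.mod_mul.
  rewrite minus_INR in Hin2 by lia. rewrite S_INR. simpl INR in Hin2. change (fun (t : nat) (y : R) => y * cc n t) with (ff n). lra.
Qed.

Theorem theorem1 :
  forall beta2 : R, 0 <= beta2 < 1 ->
  exists (a b : R) (f df : nat -> R -> R) (x1 : R),
    a <= b /\
    (forall t y, derivable_pt_lim (f t) y (df t y)) /\
    (forall t, convex_on a b (f t)) /\
    (exists G, forall t y, in_F a b y -> Rabs (df t y) <= G) /\
    in_F a b x1 /\
    forall alpha : R, 0 < alpha ->
    forall x : nat -> R, is_adam_run a b df alpha 0 beta2 x1 x ->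
      ~ Un_cv (fun T => regret a b f x T / INR T) 0.
Proof.
  intros b2 Hb.
  destruct (constants b2 Hb) as (n & K & HK1 & HKn & Hdec & Hm).
  assert (Hn : (1 <= n)%nat) by lia.
  assert (HnR : 1 <= INR n) by (apply (le_INR 1); lia).
  exists 0, 1, (ff n), (dff n), 1.
  split; [lra|]. split.
  { intros t y. unfold dff.
    replace (cc n t) with (1 * cc n t) by ring.
    exact (derivable_pt_lim_scal_right id y 1 (cc n t) (derivable_pt_lim_id y)). }
  split.
  { intros t u v l _ _ _. unfold ff. right. ring. }
  split.
  { exists (INR n). intros t y _. unfold dff, cc. destruct (Nat.eqb _ _).
    - rewrite Rabs_pos_eq; lra.
    - rewrite Rabs_left by lra. lra. }
  split; [unfold in_F; lra|].
  intros alpha Ha x Hr Hcv.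
  pose proof (x_in n alpha b2 x Hr) as Hin.
  pose proof (all_tops n K alpha b2 x HK1 HKn Hb Ha Hdec Hm Hr) as Htop.
  pose proof (cum_bound n x Hn Hin Htop) as Hcum.
  assert (Heps : 0 < / INR n) by (apply Rinv_0_lt_compat; lra).
  destruct (Hcv (/ INR n) Heps) as [N HN].
  specialize (HN ((N + 1) * n)%nat ltac:(nia)).
  unfold Rdist in HN. rewrite Rminus_0_r in HN.
  set (T := ((N + 1) * n)%nat) in *.
  assert (HTR : INR T = INR (N + 1) * INR n) by (unfold T; apply mult_INR).
  assert (HQ : 1 <= INR (N + 1)) by (apply (le_INR 1); lia).
  assert (Hreg : INR (N + 1) <= regret 0 1 (ff n) x T).
  { unfold regret. pose proof (min_le n T). specialize (Hcum (N + 1)%nat). fold T in Hcum. lra. }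
  assert (HT0 : 0 < INR T) by nra.
  assert (Hge : / INR n <= regret 0 1 (ff n) x T / INR T).
  { rewrite HTR. apply (Rmult_le_reg_r (INR (N + 1) * INR n)); [nra|].
    unfold Rdiv. rewrite Rmult_assoc, Rinv_l by nra.
    replace (/ INR n * (INR (N + 1) * INR n)) with (INR (N + 1)) by (field; lra). lra. }
  rewrite Rabs_pos_eq in HN by (pose proof (Rlt_le _ _ Heps); lra).
  lra.
Qed.
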